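(* Let $n\ge1$ and $m\ge1$ be integers and $q\in\mathbb{C}$. With $K_n(x,q)=(1+x)^{2n}+qx^n$ and $f_m(x)=(x^{2m+1}-1)/(x-1)$, \[ \Delta_x\big(K_n(x,q)f_m(x)\big)=C_m^{(n)}\,q^{2n-1}(q+2^{2n})\prod_{k=1}^{m}\big(q+(2\cos k\theta_m+2)^n\big)^4 = C_m^{(n)}\,q^{2n-1}(q+2^{2n})\,H_m^{(n)}(q)^4, \] where $C_m^{(n)}=(-1)^m(2m+1)^{2m-1}n^{2n}$.
   Context: For a polynomial $P(x)$ of degree $d$ with leading coefficient $a_d$ and roots $x_1,\dots,x_d$ (with multiplicity), its discriminant is $\Delta_x P=a_d^{2d-2}\prod_{1\le i<j\le d}(x_i-x_j)^2$. For integers $m\ge0$, $n\ge1$, let $\theta_m=2\pi/(2m+1)$ and $H_m^{(n)}(q)=\prod_{k=1}^{m}\big(q+(2\cos k\theta_m+2)^n\big)$ (so $H_0^{(n)}=1$). *)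

(* Defs.v *)
From HB Require Import structures.
From mathcomp Require Import all_boot all_order all_algebra.
Set Implicit Arguments. Unset Strict Implicit. Unset Printing Implicit Defensive.
Import Order.TTheory GRing.Theory Num.Theory.
Local Open Scope ring_scope.

Section Defs.
Variable C : numClosedFieldType.

(* A root list (with multiplicity) of p : p = lead_coef p * prod (X - r). *)
Definition roots_of (p : {poly C}) : seq C :=
  sval (closed_field_poly_normal p).

Definition disc (p : {poly C}) : C :=
  let rs := roots_of p in
  lead_coef p ^+ (2 * (size p).-1 - 2) *
  \prod_(i < size rs) \prod_(j < size rs | (i < j)%N) (rs`_i - rs`_j) ^+ 2.

Definition Kpoly (n : nat) (q : C) : {poly C} :=
  (1 + 'X) ^+ (2 * n) + q *: 'X^n.

Definition fpoly (m : nat) : {poly C} :=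
  ('X^(2 * m + 1) - 1) %/ ('X - 1).

(* zeta_m = exp(i theta_m) = exp(2 pi i/(2m+1)); N.-root (-1) = exp(i pi/N) *)
Definition zeta (m : nat) : C := ((2 * m + 1).-root (-1)) ^+ 2.

Definition twocos (m k : nat) : C := zeta m ^+ k + zeta m ^- k.

Definition Hpoly (m n : nat) (q : C) : C :=
  \prod_(1 <= k < m.+1) (q + (twocos m k + 2) ^+ n).

Definition Cconst (m n : nat) : C :=
  (-1) ^+ m * (2 * m + 1)%:R ^+ (2 * m - 1) * n%:R ^+ (2 * n).

End Defs.

(* Main.v *)
Require Import Defs.
From HB Require Import structures.
From mathcomp Require Import all_boot all_order all_algebra.
From mathcomp Require Import all_solvable all_field.
From mathcomp Require Import ring zify.
Import Order.TTheory GRing.Theory Num.Theory.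
Local Open Scope ring_scope.
Set Implicit Arguments. Unset Strict Implicit. Unset Printing Implicit Defensive.


Section Prim.
Variable C : numClosedFieldType.

Lemma real_ineq (av au bv bu : C) : av \is Num.real -> au \is Num.real ->
  av < au -> au < 1 -> av ^+ 2 + bv ^+ 2 = 1 -> au ^+ 2 + bu ^+ 2 = 1 ->
  0 <= bv -> 0 < bu -> av * (1 - au) < bv * bu.
Proof.
move=> avR auR avu au1 ev eu bv0 bu0.
have au1' : 0 < 1 - au by rewrite subr_gt0.
have bvR : bv \is Num.real by apply: ger0_real.
have buR : bu \is Num.real by apply: gtr0_real.
case: (real_ltgtP avR (real0 C)) => [av0|av0|av0].
- apply: (lt_le_trans (y := 0)); first by rewrite nmulr_rlt0.
  by rewrite mulr_ge0 // ltW.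
- have hbv2 : bv ^+ 2 < bu ^+ 2 -> False.
    move=> h. have: av ^+ 2 < au ^+ 2.
      by rewrite !expr2 ltr_pM // ltW.
    have eav : av ^+ 2 = 1 - bv ^+ 2 by rewrite -ev addrK.
    have eau : au ^+ 2 = 1 - bu ^+ 2 by rewrite -eu addrK.
    rewrite eav eau ltrD2l ltrN2 => h2.
    by have := lt_trans h h2; rewrite ltxx.
  have bub : bu <= bv.
    rewrite real_leNgt //; apply/negP => h; apply: hbv2.
    by rewrite !expr2 ltr_pM.
  apply: (lt_le_trans (y := au * (1 - au))); first by rewrite ltr_pM2r.
  apply: (le_trans (y := (1 + au) * (1 - au))).
    by apply: ler_wpM2r; [exact: ltW | rewrite lerDr ler01].
  have -> : (1 + au) * (1 - au) = bu * bu.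
    have -> : bu * bu = 1 - au ^+ 2 by rewrite -eu; ring.
    by ring.
  by apply: ler_wpM2r; [exact: ltW | exact: bub].
- subst av. rewrite mul0r mulr_gt0 //.
  move: ev; rewrite expr0n /= add0r => /eqP; rewrite sqrf_eq1 => /orP[/eqP->|/eqP h] //.
  by move: bv0; rewrite h ler0N1.
Qed.

Lemma norm1 (M : nat) (x : C) : (0 < M)%N -> x ^+ M = 1 -> `|x| = 1.
Proof.
by move=> M0 h; apply/eqP; rewrite -(pexpr_eq1 M0 (normr_ge0 x)) -normrX h normr1.
Qed.

Lemma ReIm1 (x : C) : `|x| = 1 -> 'Re x ^+ 2 + 'Im x ^+ 2 = 1.
Proof. by move=> h; rewrite -normC2_Re_Im h expr1n. Qed.

Lemma conj_inv (x : C) : `|x| = 1 -> x^* * x = 1.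
Proof. by move=> h; rewrite -normCKC h expr1n. Qed.

Lemma Re_bounds (x : C) : `|x| = 1 -> -1 <= 'Re x <= 1.
Proof. by move=> h; have := (leif_normC_Re_Creal x).1; rewrite h real_ler_norml ?Creal_Re. Qed.

Lemma Re_eq1 (x : C) : `|x| = 1 -> 'Re x = 1 -> x = 1.
Proof.
move=> h hr; have := ReIm1 h; rewrite hr expr1n => /eqP.
rewrite -subr_eq0 addrC addKr sqrf_eq0 => /eqP hi.
by rewrite [x]Crect hr hi mulr0 addr0.
Qed.

Lemma max_Re (s : seq C) : s != [::] ->
  exists2 v, v \in s & forall w, w \in s -> 'Re w <= 'Re v.
Proof.
elim: s => // a [|b s] IH _.
  by exists a; rewrite ?mem_head // => w; rewrite inE => /eqP->.
have [v vin vmax] := IH isT.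
case/orP: (real_leVge (Creal_Re v) (Creal_Re a)) => h.
  exists a; first exact: mem_head.
  move=> w; rewrite inE => /orP[/eqP->//|/vmax hw]; exact: le_trans hw h.
exists v; first by rewrite inE vin orbT.
by move=> w; rewrite inE => /orP[/eqP->//|/vmax].
Qed.

Lemma prim_max (M : nat) (u : C) : (2 < M)%N -> u ^+ M = 1 -> u != 1 ->
  (forall w, w ^+ M = 1 -> w != 1 -> 'Re w <= 'Re u) -> M.-primitive_root u.
Proof.
move=> M2 uM u1 umax.
have M0 : (0 < M)%N by apply: ltn_trans M2.
have [rs Dp] := closed_field_poly_normal ('X^M - 1 : {poly C}).
rewrite (monicP _) ?monicXnsubC // scale1r in Dp.
have memrs x : (x \in rs) = (x ^+ M == 1).
  by rewrite -root_prod_XsubC -Dp rootE !hornerE subr_eq0.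
have [g grs gprim] : exists2 g, g \in rs & M.-primitive_root g.
  apply/hasP; apply: has_prim_root => //.
  - by apply/allP => x; rewrite memrs unity_rootE.
  - by rewrite -separable_prod_XsubC -Dp separable_Xn_sub_1 // pnatr_eq0 -lt0n.
  - by rewrite -ltnS -(size_prod_XsubC rs id) -Dp size_XnsubC.
have normu := norm1 M0 uM.
have u0 : u != 0.
  by apply/eqP => h; move: uM; rewrite h expr0n gtn_eqF //= => /esym/eqP; rewrite oner_eq0.
have uc : u^* = u ^+ M.-1.
  by apply: (mulIf u0); rewrite conj_inv // -exprSr prednK // uM.
pose ispow x := [exists j : 'I_M, x == u ^+ j].
have powM (j : nat) : ispow (u ^+ j).
  by apply/existsP; exists (Ordinal (ltn_pmod j M0)); rewrite /= expr_mod.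
have ispowP x : ispow x -> exists j, x = u ^+ j.
  by case/existsP => j /eqP ->; exists (nat_of_ord j).
have allpow x : x \in rs -> ispow x.
  move=> xrs; case: (boolP (ispow x)) => // nx; exfalso.
  pose S := [seq y <- rs | ~~ ispow y].
  have SN : S != [::].
    apply/eqP => S0; have: x \in S by rewrite mem_filter nx xrs.
    by rewrite S0.
  have [v] := max_Re SN; rewrite mem_filter => /andP [nv vrs] vmax.
  have vM : v ^+ M = 1 by apply/eqP; rewrite -memrs.
  have normv := norm1 M0 vM.
  have v1 : v != 1 by apply: contra nv => /eqP ->; rewrite -(expr0 u) powM.
  have Rvu : 'Re v < 'Re u.
    rewrite lt_neqAle umax // andbT; apply/eqP => eRe; apply/negP: nv.
    have : 'Im v ^+ 2 == 'Im u ^+ 2.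
      by apply/eqP; apply: (@addrI _ ('Re u ^+ 2)); rewrite -{1}eRe !ReIm1.
    rewrite eqf_sqr => /orP [/eqP h|/eqP h].
      have -> : v = u by apply/eqCP.
      by rewrite negbK -(expr1 u) powM.
    have -> : v = u^* by apply/eqCP; rewrite Re_conj Im_conj.
    by rewrite negbK uc powM.
  have au1 : 'Re u < 1.
    rewrite lt_neqAle (andP (Re_bounds normu)).2 andbT.
    by apply: contra u1 => /eqP h; apply/eqP; exact: Re_eq1.
  have Imu0 : 0 < `|'Im u|.
    rewrite normr_gt0; apply/eqP => h.
    have := ReIm1 normu; rewrite h expr0n addr0 => /eqP; rewrite sqrf_eq1.
    case/orP => /eqP h1; first by move: au1; rewrite h1 ltxx.
    have := (andP (Re_bounds normv)).1; rewrite -h1 => h2.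
    by have := lt_le_trans Rvu h2; rewrite ltxx.
  pose w := if 0 <= 'Im v * 'Im u then v * u^* else v * u.
  have Rw : 'Re w = 'Re v * 'Re u + `|'Im v| * `|'Im u|.
    rewrite /w -normrM; case: ifP => h.
      by rewrite ReM Re_conj Im_conj mulrN opprK ger0_norm.
    have h' : 'Im v * 'Im u <= 0.
      by apply: ltW; rewrite real_ltNge ?h // ?rpredM ?Creal_Im ?real0.
    by rewrite ReM ler0_norm.
  have wM : w ^+ M = 1.
    rewrite /w; case: ifP => _; rewrite exprMn vM mul1r //.
    by rewrite uc -exprM mulnC exprM uM expr1n.
  have nw : ~~ ispow w.
    apply: contra nv => /ispowP [j hj].
    have [e ->] : exists e, v = w * u ^+ e.
      rewrite /w; case: ifP => _.
        by exists 1%N; rewrite uc -mulrA -exprSr prednK // uM mulr1.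
      by exists M.-1; rewrite -mulrA -exprS prednK // uM mulr1.
    by rewrite hj -exprD powM.
  have wrs : w \in rs by rewrite memrs wM.
  have := vmax w; rewrite mem_filter nw wrs => /(_ isT).
  rewrite Rw => hmax.
  have hi := real_ineq (Creal_Re v) (Creal_Re u) Rvu au1
     (etrans (congr1 (fun t => _ + t) (real_normK (Creal_Im v))) (ReIm1 normv))
     (etrans (congr1 (fun t => _ + t) (real_normK (Creal_Im u))) (ReIm1 normu))
     (normr_ge0 _) Imu0.
  rewrite -subr_gt0 in hi.
  have h2 : 0 < ('Re v * 'Re u + `|'Im v| * `|'Im u|) - 'Re v.
    by rewrite (_ : _ - _ = `|'Im v| * `|'Im u| - 'Re v * (1 - 'Re u)) //; ring.
  rewrite subr_gt0 in h2.
  by have := lt_le_trans h2 hmax; rewrite ltxx.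
have [j gj] := ispowP _ (allpow g grs).
have [k kprim kdvd] := prim_order_exists M0 uM.
have Mk : (M %| k)%N.
  by rewrite (prim_order_dvd gprim) gj -exprM mulnC exprM (prim_expr_order kprim) expr1n.
by have -> : M = k by apply/eqP; rewrite eqn_dvd Mk kdvd.
Qed.

Lemma unity_list (M : nat) : (0 < M)%N ->
  exists rs : seq C, forall x, (x \in rs) = (x ^+ M == 1).
Proof.
move=> M0; have [rs Dp] := closed_field_poly_normal ('X^M - 1 : {poly C}).
rewrite (monicP _) ?monicXnsubC // scale1r in Dp.
by exists rs => x; rewrite -root_prod_XsubC -Dp rootE !hornerE subr_eq0.
Qed.

Lemma m1_neq1 : (-1 : C) != 1.
Proof.
by rewrite -subr_eq0 -opprD oppr_eq0 (_ : 1 + 1 = 2%:R) // pnatr_eq0.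
Qed.

Lemma conj_pow (M : nat) (u : C) : (0 < M)%N -> u ^+ M = 1 -> u^* = u ^+ M.-1.
Proof.
move=> M0 uM; have normu := norm1 M0 uM.
have u0 : u != 0.
  by apply/eqP => h; move: uM; rewrite h expr0n gtn_eqF //= => /esym/eqP; rewrite oner_eq0.
by apply: (mulIf u0); rewrite conj_inv // -exprSr prednK // uM.
Qed.

Lemma zeta_prim (m : nat) : (0 < m)%N -> (2 * m + 1).-primitive_root (zeta C m).
Proof.
move=> m0; rewrite /zeta.
set N := (2 * m + 1)%N.
have N1 : (1 < N)%N by rewrite /N; lia.
have N0 : (0 < N)%N by lia.
set y := N.-root (-1).
have yN : y ^+ N = -1 by rewrite /y rootCK.
set M := (2 * N)%N.
have M2 : (2 < M)%N by rewrite /M; lia.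
have M0 : (0 < M)%N by lia.
have yM : y ^+ M = 1 by rewrite /M mulnC exprM yN sqrrN expr1n.
have y1 : y != 1 by apply/eqP => h; move: yN; rewrite h expr1n => /esym/eqP; rewrite (negbTE m1_neq1).
have [rs memrs] := unity_list M0.
have SN : [seq x <- rs | x != 1] != [::].
  apply/eqP => S0; have : (-1 : C) \in [seq x <- rs | x != 1].
    by rewrite mem_filter m1_neq1 memrs /M exprM sqrrN !expr1n eqxx.
  by rewrite S0.
have [u1] := max_Re SN; rewrite mem_filter => /andP [u11 u1rs] u1max.
have u1M : u1 ^+ M = 1 by apply/eqP; rewrite -memrs.
have u1prim : M.-primitive_root u1.
  apply: prim_max => // w wM w1; apply: u1max; by rewrite mem_filter w1 memrs wM eqxx.
have u1N : u1 ^+ N = -1.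
  have : (u1 ^+ N) ^+ 2 == 1 by rewrite -exprM mulnC u1M.
  rewrite sqrf_eq1 => /orP [h|/eqP //].
  move: h; rewrite -(prim_order_dvd u1prim) /M => h.
  by have := dvdn_leq N0 h; lia.
set u' := if 0 <= 'Im u1 then u1 else u1^*.
have Ru' : 'Re u' = 'Re u1 by rewrite /u'; case: ifP => // _; rewrite Re_conj.
have u'N : u' ^+ N = -1.
  by rewrite /u'; case: ifP => // _; rewrite -rmorphXn u1N rmorphN1.
have Iu' : 0 <= 'Im u'.
  rewrite /u'; case: ifP => // h; rewrite Im_conj oppr_ge0 ltW //.
  by rewrite real_ltNge ?h ?Creal_Im ?real0.
have h1 := rootC_Re_max N0 u'N Iu'; rewrite Ru' -/y in h1.
have h2 : 'Re y <= 'Re u1 by apply: u1max; rewrite mem_filter y1 memrs yM eqxx.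
have eRe : 'Re y = 'Re u1 by apply/eqP; rewrite eq_le h1 h2.
have yprim : M.-primitive_root y.
  have : 'Im y ^+ 2 == 'Im u1 ^+ 2.
    apply/eqP; apply: (@addrI _ ('Re u1 ^+ 2)).
    by rewrite -{1}eRe !ReIm1 // (norm1 M0).
  rewrite eqf_sqr => /orP [/eqP h|/eqP h].
    by have -> : y = u1 by apply/eqCP.
  have -> : y = u1 ^+ M.-1.
    by rewrite -(conj_pow M0 u1M); apply/eqCP; rewrite Re_conj Im_conj.
  by rewrite prim_root_exp_coprime // -{2}(prednK M0) coprimenS.
have := exp_prim_root yprim 2.
by rewrite /M gcdnMr mulKn.
Qed.
End Prim.


Section Disc.
Variable C : numClosedFieldType.

Lemma deriv_prod_at (s : seq C) (i : nat) : (i < size s)%N ->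
  (\prod_(r <- s) ('X - r%:P))^`().[s`_i] =
  \prod_(j < size s | (j : nat) != i) (s`_i - s`_j).
Proof.
elim: s i => [|a t IH] i //= hi.
rewrite big_cons derivM derivXsubC mul1r hornerD hornerM hornerXsubC.
rewrite [RHS]big_mkcond big_ord_recl /bump /=.
case: i hi => [|k] hk /=.
  rewrite subrr mul0r addr0 mul1r horner_prod (big_nth 0) big_mkord.
  by apply: eq_bigr => j _; rewrite hornerXsubC add0n.
have -> : (\prod_(r <- t) ('X - r%:P)).[t`_k] = 0.
  by apply/rootP; rewrite root_prod_XsubC mem_nth.
rewrite add0r; congr (_ * _); rewrite IH // big_mkcond.
by apply: eq_bigr => j _; rewrite /bump leq0n add1n add0n eqSS.
Qed.

Lemma prod_gt_const (c : C) (i d : nat) :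
  \prod_(j < d | (i < j)%N) c = c ^+ (d - i.+1).
Proof.
elim: d => [|d IH]; first by rewrite big_ord0 sub0n expr0.
rewrite big_mkcond big_ord_recr /= -big_mkcond /= IH.
case: (ltnP i d) => h.
  by rewrite subSn // exprS mulrC.
have e : (d - i.+1 = 0)%N by apply/eqP; rewrite subn_eq0 leqW.
have e' : (d.+1 - i.+1 = 0)%N by apply/eqP; rewrite subn_eq0.
by rewrite mulr1 e e'.
Qed.

Lemma pairs_sign (d : nat) (x : nat -> C) :
  \prod_(i < d) \prod_(j < d | (i < j)%N) (x i - x j) ^+ 2 =
  (-1) ^+ 'C(d, 2) * \prod_(i < d) \prod_(j < d | (j : nat) != i) (x i - x j).
Proof.
have e1 i j : (x i - x j) ^+ 2 = -1 * ((x i - x j) * (x j - x i)) by rewrite mulN1r -mulrN opprB expr2.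
under eq_bigr => i _ do under eq_bigr => j _ do rewrite e1.
under eq_bigr => i _ do rewrite big_split /= big_split /=.
rewrite big_split /= big_split /=.
under eq_bigr => i _ do rewrite prod_gt_const.
have hs : (\sum_(i < d) (d - i.+1) = 'C(d, 2))%N.
  rewrite -bin2_sum big_mkord (reindex_inj rev_ord_inj) /=.
  by apply: eq_bigr => i _; have := ltn_ord i; lia.
rewrite prodrXr hs.
congr (_ * _).
under [RHS]eq_bigr => i _ do rewrite (bigID (fun j : 'I_d => (i < j)%N)) /=.
rewrite big_split /=; congr (_ * _).
  apply: eq_bigr => i _; apply: eq_bigl => j.
  by case: (ltngtP i j) => //= h; rewrite ?(gtn_eqF h) ?(ltn_eqF h).
rewrite (exchange_big_dep xpredT) //=.
apply: eq_bigr => i _; apply: eq_bigl => j.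
by case: (ltngtP i j) => //= h; rewrite ?(gtn_eqF h) ?(ltn_eqF h).
Qed.

Lemma disc_prod (p : {poly C}) (rs : seq C) : p = \prod_(r <- rs) ('X - r%:P) ->
  disc p = (-1) ^+ 'C(size rs, 2) * \prod_(r <- rs) p^`().[r].
Proof.
move=> Dp.
have lc : lead_coef p = 1 by rewrite Dp; apply/monicP/monic_prod_XsubC.
rewrite /disc /roots_of; case: (closed_field_poly_normal p) => rs' /= Dp'.
rewrite lc scale1r in Dp'.
have prs : perm_eq rs' rs by apply: prod_XsubC_eq; rewrite -Dp' -Dp.
rewrite lc expr1n mul1r (perm_size prs) -(perm_big _ prs) /=.
rewrite (pairs_sign _ (nth 0 rs')).
congr (_ * _); rewrite (big_nth 0) big_mkord.
rewrite -(perm_size prs); apply: eq_bigr => i _; by rewrite {1}Dp' deriv_prod_at.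
Qed.
End Disc.


Section Comp.
Variable C : numClosedFieldType.

Lemma prodN_seq (s : seq C) (F : C -> C) :
  \prod_(r <- s) (- F r) = (-1) ^+ size s * \prod_(r <- s) F r.
Proof.
elim: s => [|a s IH]; first by rewrite !big_nil expr0 mulr1.
by rewrite !big_cons IH /= exprS; ring.
Qed.

Lemma prod_const_seq (s : seq C) (c : C) : \prod_(r <- s) c = c ^+ size s.
Proof.
elim: s => [|a s IH]; first by rewrite big_nil expr0.
by rewrite big_cons IH /= exprS.
Qed.

Variables (n m : nat) (q : C).
Hypotheses (n1 : (1 <= n)%N) (m1 : (1 <= m)%N).

Let K := Kpoly n q.

Lemma sizeP : size ((1 + 'X : {poly C}) ^+ (2 * n)) = (2 * n).+1.
Proof.
have s1 : size (1 + 'X : {poly C}) = 2 by rewrite addrC -polyC1 size_XaddC.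
have nz : (1 + 'X : {poly C}) ^+ (2 * n) != 0.
  by rewrite expf_neq0 // -size_poly_eq0 s1.
have := size_exp (1 + 'X : {poly C}) (2 * n); rewrite s1 mul1n => e.
by rewrite -[X in _ = X.+1]e prednK // lt0n size_poly_eq0.
Qed.

Lemma sizeQ : (size (q *: 'X^n : {poly C}) < (2 * n).+1)%N.
Proof. by apply: (leq_ltn_trans (size_scale_leq _ _)); rewrite size_polyXn; lia. Qed.

Lemma sizeK : size K = (2 * n).+1.
Proof. by rewrite /K /Kpoly size_polyDl sizeP // sizeQ. Qed.

Lemma monicK : K \is monic.
Proof.
rewrite /K /Kpoly monicE lead_coefDl ?sizeP ?sizeQ //.
by rewrite -monicE monic_exp // addrC -polyC1 monicXaddC.
Qed.

Definition rK := roots_of K.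

Lemma Kprod : K = \prod_(r <- rK) ('X - r%:P).
Proof.
rewrite /rK /roots_of; case: (closed_field_poly_normal K) => rs /= h.
by rewrite {1}h (monicP monicK) scale1r.
Qed.

Lemma size_rK : size rK = (2 * n)%N.
Proof. by apply: succn_inj; rewrite -sizeK Kprod size_prod_XsubC. Qed.

Lemma hK (c : C) : K.[c] = \prod_(r <- rK) (c - r).
Proof.
by rewrite {1}Kprod horner_prod; apply: eq_bigr => r _; rewrite hornerXsubC.
Qed.

Lemma Kval (c : C) : K.[c] = (1 + c) ^+ (2 * n) + q * c ^+ n.
Proof. by rewrite /K /Kpoly !hornerE. Qed.

Lemma Kroot r : r \in rK -> K.[r] = 0.
Proof. by move=> h; apply/rootP; rewrite Kprod root_prod_XsubC. Qed.

Lemma Kderiv (c : C) :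
  K^`().[c] = (2 * n)%:R * (1 + c) ^+ (2 * n).-1 + q * n%:R * c ^+ n.-1.
Proof.
rewrite /K /Kpoly derivD deriv_exp derivZ derivXn derivD derivC derivX add0r mul1r.
by rewrite hornerD !hornerMn !hornerE hornerMn hornerXn -[_ *+ (2 * n)]mulr_natl -[_ *+ n]mulr_natl mulrA.
Qed.
Lemma sgn2 (k : nat) : (-1) ^+ (2 * k) = 1 :> C.
Proof. by rewrite exprM sqrrN expr1n expr1n. Qed.

Lemma sgnsq (k : nat) : (-1) ^+ k * (-1) ^+ k = 1 :> C.
Proof. by rewrite -exprD addnn -mul2n sgn2. Qed.

Lemma DK : \prod_(r <- rK) K^`().[r] =
  (-1) ^+ n * n%:R ^+ (2 * n) * q ^+ (2 * n - 1) * (q + 2 ^+ (2 * n)).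
Proof.
have n2 : (2 * n == 0)%N = false by apply/eqP; lia.
have n2' : ((2 * n).-1 == 0)%N = false by apply/eqP; lia.
have n2'' : ((2 * n - 1) == 0)%N = false by apply/eqP; lia.
have [hq|q0] := eqVneq q 0.
  have hm1 : K.[-1] = 0.
    by rewrite Kval hq addrN expr0n n2 mul0r addr0.
  rewrite hK in hm1; move/eqP: hm1; rewrite prodf_seq_eq0 => /hasP [r hr /=].
  rewrite subr_eq0 => /eqP er.
  rewrite hq expr0n n2'' !mulr0 mul0r; apply/eqP; rewrite prodf_seq_eq0.
  apply/hasP; exists r => //=.
  by rewrite Kderiv -er addrN expr0n n2' hq /= mulr0 !mul0r addr0.
have key r : r \in rK -> K^`().[r] * (r * (1 + r)) = n%:R * q * r ^+ n * (1 - r).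
  move=> hr; have e := Kroot hr; rewrite Kval in e.
  rewrite Kderiv.
  set A := (1 + r) ^+ (2 * n).-1; set B := r ^+ n.-1.
  have eA : A * (1 + r) = (1 + r) ^+ (2 * n) by rewrite -exprSr prednK //; lia.
  have eB : B * r = r ^+ n by rewrite -exprSr prednK.
  transitivity (n%:R * q * r ^+ n * (1 - r) +
                (2 * n)%:R * r * ((1 + r) ^+ (2 * n) + q * r ^+ n)); last first.
    by rewrite e mulr0 addr0.
  by rewrite -eA -eB natrM; ring.
have P1 : \prod_(r <- rK) (K^`().[r] * (r * (1 + r))) =
          \prod_(r <- rK) (n%:R * q * r ^+ n * (1 - r)).
  by apply: eq_big_seq => r hr; exact: key.
rewrite !big_split /= prod_const_seq prodrXl size_rK in P1.
have Pr : \prod_(r <- rK) r = 1.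
  have n0 : (n == 0)%N = false by apply/eqP; lia.
  have := hK 0; rewrite Kval addr0 expr1n expr0n n0 /= mulr0 addr0.
  under eq_bigr => r _ do rewrite sub0r.
  by rewrite prodN_seq size_rK sgn2 mul1r => <-.
have P1r : \prod_(r <- rK) (1 + r) = q * (-1) ^+ n.
  have := hK (-1); rewrite Kval addrN expr0n n2 /= add0r.
  have -> : \prod_(r <- rK) (-1 - r) = \prod_(r <- rK) (- (1 + r)).
    by apply: eq_bigr => r _; rewrite opprD.
  by rewrite prodN_seq size_rK sgn2 mul1r => <-.
have P1m : \prod_(r <- rK) (1 - r) = 2 ^+ (2 * n) + q.
  by rewrite -hK Kval expr1n mulr1.
rewrite Pr P1r P1m expr1n mul1r mulr1 in P1.
have nz : q * (-1) ^+ n != 0 by rewrite mulf_neq0 // expf_neq0 // oppr_eq0 oner_eq0.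
apply: (mulIf nz); rewrite P1.
have eq : q ^+ (2 * n) = q ^+ (2 * n - 1) * q by rewrite -exprSr; congr (_ ^+ _); lia.
rewrite prod_const_seq size_rK eq.
transitivity ((-1) ^+ n * (-1) ^+ n * (n%:R ^+ (2 * n) * (q ^+ (2 * n - 1) * q) * (2 ^+ (2 * n) + q))).
  by rewrite sgnsq mul1r.
ring.
Qed.
End Comp.


Section F.
Variable C : numClosedFieldType.
Variable m : nat.
Hypothesis m1 : (1 <= m)%N.

Let N := (2 * m + 1)%N.
Let z := zeta C m.
Let f := fpoly C m.

Lemma zp : N.-primitive_root z.
Proof. exact: zeta_prim. Qed.

Definition rf := [seq z ^+ i | i <- index_iota 1 N].

Lemma hXf : ('X - 1) * \prod_(r <- rf) ('X - r%:P) = 'X^N - 1 :> {poly C}.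
Proof.
have := factor_Xn_sub_1 zp; rewrite big_ltn; last by rewrite /N; lia.
by rewrite expr0 polyC1 big_map.
Qed.

Lemma fprod : f = \prod_(r <- rf) ('X - r%:P).
Proof.
by rewrite /f /fpoly -/N -hXf mulKp // -polyC1 polyXsubC_eq0.
Qed.

Lemma size_rf : size rf = (2 * m)%N.
Proof. by rewrite size_map size_iota /N; lia. Qed.

Lemma hf (c : C) : f.[c] = \prod_(r <- rf) (c - r).
Proof.
by rewrite fprod horner_prod; apply: eq_bigr => r _; rewrite hornerXsubC.
Qed.

Lemma froot r : r \in rf -> f.[r] = 0.
Proof. by move=> h; apply/rootP; rewrite fprod root_prod_XsubC. Qed.

Lemma fderiv (c : C) : f.[c] + (c - 1) * f^`().[c] = N%:R * c ^+ N.-1.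
Proof.
have := congr1 (fun p => p^`().[c]) hXf; rewrite -fprod /=.
rewrite derivM !derivB derivX derivXn -polyC1 derivC subr0 mul1r.
by rewrite !hornerE hornerMn hornerXn subr0 -mulr_natl.
Qed.

Lemma f1 : f.[1] = N%:R.
Proof. by have := fderiv 1; rewrite subrr mul0r addr0 expr1n mulr1. Qed.

Lemma f0 : f.[0] = 1.
Proof.
have := congr1 (fun p => p.[0]) hXf; rewrite -fprod /= !hornerE expr0n /=.
have NN : (N == 0)%N = false by apply/eqP; rewrite /N; lia.
by rewrite NN /= sub0r mulN1r => /eqP; rewrite eqr_opp => /eqP.
Qed.

Lemma Pw : \prod_(r <- rf) r = 1.
Proof.
have := hf 0; rewrite f0.
under eq_bigr => r _ do rewrite sub0r.
by rewrite prodN_seq size_rf exprM sqrrN expr1n expr1n mul1r.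
Qed.

Lemma Df : \prod_(r <- rf) f^`().[r] = N%:R ^+ (2 * m - 1).
Proof.
have key w : w \in rf -> (w - 1) * f^`().[w] = N%:R * w ^+ N.-1.
  by move=> h; have := fderiv w; rewrite froot // add0r.
have P : \prod_(w <- rf) ((w - 1) * f^`().[w]) = \prod_(w <- rf) (N%:R * w ^+ N.-1).
  by apply: eq_big_seq.
rewrite big_split /= big_split /= prod_const_seq size_rf prodrXl Pw expr1n mulr1 in P.
have Pm : \prod_(r <- rf) (r - 1) = N%:R.
  rewrite -f1 hf.
  transitivity (\prod_(r <- rf) (- (1 - r))).
    by apply: eq_bigr => r _; rewrite opprB.
  by rewrite prodN_seq size_rf exprM sqrrN expr1n expr1n mul1r.
rewrite Pm in P.
have N0 : N%:R != 0 :> C by rewrite pnatr_eq0; apply/eqP; rewrite /N; lia.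
apply: (mulfI N0); rewrite P -exprS; congr (_ ^+ _); lia.
Qed.

Lemma z0 : z != 0.
Proof. by rewrite (prim_root_eq0 zp); apply/eqP; rewrite /N; lia. Qed.

Lemma tc_sym k : (k <= N)%N -> twocos C m (N - k) = twocos C m k.
Proof.
move=> kN.
have ez : z ^+ (N - k) = (z ^+ k)^-1.
  have zk : z ^+ k != 0 by rewrite expf_neq0 //; exact: z0.
  apply: (mulIf zk); rewrite mulVf //.
  by rewrite -exprD subnK // (prim_expr_order zp).
by rewrite /twocos -/z ez invrK addrC.
Qed.

Variables (n : nat) (q : C).
Hypothesis n1 : (1 <= n)%N.

Lemma Kz i : (Kpoly n q).[z ^+ i] = (z ^+ i) ^+ n * (q + (twocos C m i + 2) ^+ n).
Proof.
rewrite Kval /twocos -/z.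
set w := z ^+ i.
have w0 : w != 0 by rewrite expf_neq0 //; exact: z0.
have e : (1 + w) ^+ 2 = w * (w + w^-1 + 2) by field.
rewrite exprM e exprMn; ring.
Qed.

Lemma PKz : \prod_(r <- rf) (Kpoly n q).[r] = Hpoly m n q ^+ 2.
Proof.
rewrite big_map.
under eq_bigr => i _ do rewrite Kz.
rewrite big_split /= prodrXl.
have -> : \prod_(i <- index_iota 1 N) z ^+ i = 1.
  by have := Pw; rewrite big_map.
rewrite expr1n mul1r.
set g := fun i => q + (twocos C m i + 2) ^+ n.
have e2 : \prod_(m.+1 <= i < N) g i = Hpoly m n q.
  rewrite big_nat_rev /=.
  transitivity (\prod_(m.+1 <= i < N) g (i - m)%N).
    apply: eq_big_nat => i /andP [h1 h2].
    rewrite (_ : (m.+1 + N - i.+1 = N - (i - m))%N); last by rewrite /N; lia.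
    by rewrite /g tc_sym //; rewrite /N; lia.
  rewrite -[m.+1]/(1 + m)%N big_addn (_ : (N - m = m.+1)%N); last by rewrite /N; lia.
  by apply: eq_bigr => i _; rewrite addnK.
rewrite -/(index_iota 1 N) (big_cat_nat _ (n := m.+1)) //=; last by rewrite /N; lia.
by rewrite e2 expr2.
Qed.
End F.


Lemma sign_bin (C : numClosedFieldType) (k : nat) : (0 < k)%N ->
  (-1) ^+ 'C(2 * k, 2) = (-1) ^+ k :> C.
Proof.
move=> k0.
have e : 'C(2 * k, 2) = (k * (2 * k).-1)%N.
  by rewrite bin2 -mulnA mul2n doubleK.
rewrite -signr_odd e oddM.
have -> : odd (2 * k).-1.
  rewrite (_ : (2 * k).-1 = (2 * (k - 1)).+1); last by lia.
  by rewrite /= oddM.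
by rewrite andbT signr_odd.
Qed.

Unset Implicit Arguments.
Theorem proposition2p3 (C : numClosedFieldType) (n m : nat) (q : C) :
  (1 <= n)%N -> (1 <= m)%N ->
  disc (Kpoly n q * fpoly C m) =
    Cconst C m n * q ^+ (2 * n - 1) * (q + 2 ^+ (2 * n)) *
    \prod_(1 <= k < m.+1) (q + (twocos C m k + 2) ^+ n) ^+ 4
  /\
  disc (Kpoly n q * fpoly C m) =
    Cconst C m n * q ^+ (2 * n - 1) * (q + 2 ^+ (2 * n)) * Hpoly m n q ^+ 4.
Proof.
move=> n1 m1.
set K := Kpoly n q; set f := fpoly C m.
have Pprod : K * f = \prod_(r <- rK n q ++ rf C m) ('X - r%:P).
  by rewrite big_cat -(Kprod (m:=m)) // -fprod.
have D := disc_prod Pprod.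
rewrite size_cat (size_rK (m:=m)) // size_rf // big_cat /= in D.
have T1 : \prod_(r <- rK n q) (K * f)^`().[r] =
          \prod_(r <- rK n q) K^`().[r] * \prod_(r <- rK n q) f.[r].
  rewrite -big_split; apply: eq_big_seq => r hr /=.
  by rewrite derivM hornerD !hornerM (Kroot (m:=m)) // mul0r addr0.
have T2 : \prod_(r <- rf C m) (K * f)^`().[r] =
          \prod_(r <- rf C m) K.[r] * \prod_(r <- rf C m) f^`().[r].
  rewrite -big_split; apply: eq_big_seq => r hr /=.
  by rewrite derivM hornerD !hornerM froot // mulr0 add0r.
have T3 : \prod_(r <- rK n q) f.[r] = \prod_(r <- rf C m) K.[r].
  under eq_bigr => r _ do rewrite (hf m1).
  rewrite exchange_big /=; apply: eq_bigr => w _.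
  rewrite (hK (m:=m)) //.
  transitivity (\prod_(r <- rK n q) - (w - r)).
    by apply: eq_bigr => r _; rewrite opprB.
  by rewrite prodN_seq (size_rK (m:=m)) // sgn2 mul1r.
rewrite T1 T2 T3 (DK (m:=m)) // Df // PKz // in D.
rewrite -mulnDr sign_bin in D; last by lia.
have H4 : \prod_(1 <= k < m.+1) (q + (twocos C m k + 2) ^+ n) ^+ 4 = Hpoly m n q ^+ 4.
  by rewrite prodrXl.
rewrite H4; split; rewrite D /Cconst exprD -[RHS]mul1r -[X in _ = X * _](sgnsq C n); ring.
Qed.
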